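(* Let $V$ be a real vector space, let $v_1,\ldots,v_d\in V$ be linearly independent, and for $i=0,\ldots,d$ let $\sigma^i=S(v_1,\ldots,v_i)$ and $\tau^{d-i}=S(v_{i+1},\ldots,v_d)$. Let $a,b>0$ and define \[A_i=a\sigma^i+b\tau^{d-i}+b(v_1+\cdots+v_i)\ (i\geqslant 0),\qquad B_i=a\sigma^{i-1}+b\tau^{d-i}+b(v_1+\cdots+v_i)\ (i\geqslant1).\] Then $(a+b)\sigma^d=A_0\cup\cdots\cup A_d$, and $(A_0\cup\cdots\cup A_{i-1})\cap A_i=B_i$ for $i\geqslant1$. Consequently, if $\varphi$ is a translation-invariant valuation on $\mathcal{K}(V)$ (with values in an abelian group), then \[\varphi((a+b)\sigma^d)=\sum_{i=0}^d\varphi(a\sigma^i+b\tau^{d-i})-\sum_{i=1}^d\varphi(a\sigma^{i-1}+b\tau^{d-i}).\]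
   Context: For linearly independent $w_1,\ldots,w_k$, $S(w_1,\ldots,w_k)=\{x_1w_1+\cdots+x_kw_k\mid 1\geqslant x_1\geqslant\cdots\geqslant x_k\geqslant0\}$, the $k$-simplex with vertices $0,w_1,w_1+w_2,\ldots,w_1+\cdots+w_k$; for $k=0$ it is $\{0\}$. Sums of sets are Minkowski sums, and adding a vector means translation. $\mathcal{K}(V)$ is the set of nonempty compact convex subsets of $V$; a valuation satisfies $\varphi(B\cup C)=\varphi(B)+\varphi(C)-\varphi(B\cap C)$ whenever $B,C,B\cup C\in\mathcal{K}(V)$. *)

(* Defs.v *)
From HB Require Import structures.
From mathcomp Require Import all_boot all_order all_algebra.
From mathcomp Require Import all_classical all_reals all_analysis.
Set Implicit Arguments. Unset Strict Implicit. Unset Printing Implicit Defensive.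
Import Order.TTheory GRing.Theory Num.Theory.
Import numFieldNormedType.Exports.
Local Open Scope classical_set_scope.
Local Open Scope ring_scope.

Section Defs.
Variables (R : realType) (n : nat).
Local Notation V := 'rV[R]_n.

Definition mink_sum (A B : set V) : set V := [set a + b | a in A & b in B].
Definition set_scale (t : R) (A : set V) : set V := [set t *: x | x in A].
Definition set_transl (x : V) (A : set V) : set V := [set x + y | y in A].

Definition convex_set (A : set V) : Prop :=
  forall x y t, A x -> A y -> 0 <= t <= 1 -> A (t *: x + (1 - t) *: y).

Definition convex_body (A : set V) : Prop :=
  A !=set0 /\ compact A /\ convex_set A.

Definition lin_indep (w : nat -> V) (k : nat) : Prop :=
  forall c : nat -> R, \sum_(j < k) c j *: w j = 0 -> forall j, (j < k)%N -> c j = 0.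

Definition simplexS (w : nat -> V) (k : nat) : set V :=
  [set y | exists c : nat -> R,
     (forall j, (j < k)%N -> 0 <= c j <= 1) /\
     (forall j, (j.+1 < k)%N -> c j.+1 <= c j) /\
     y = \sum_(j < k) c j *: w j].

Definition valuation (G : zmodType) (phi : set V -> G) : Prop :=
  forall B C, convex_body B -> convex_body C -> convex_body (B `|` C) ->
    phi (B `|` C) = phi B + phi C - phi (B `&` C).

Definition transl_invariant (G : zmodType) (phi : set V -> G) : Prop :=
  forall K x, convex_body K -> phi (set_transl x K) = phi K.

End Defs.

(* Main.v *)
Require Import Defs.
From HB Require Import structures.
From mathcomp Require Import all_boot all_order all_algebra.
From mathcomp Require Import all_classical all_reals all_analysis.
From mathcomp Require Import ring lra zify.
Import Order.TTheory GRing.Theory Num.Theory.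
Import numFieldNormedType.Exports.
Local Open Scope classical_set_scope.
Local Open Scope ring_scope.
Section H.
Context (R : realType) (n d : nat) (v : nat -> 'rV[R]_n) (a b : R).
Context (a0 : 0 < a) (b0 : 0 < b).
Ltac lr := have := a0; have := b0; move=> ? ?; lra.


Definition lo m j : R := if (j < m)%N then b else 0.
Definition hi m j : R := if (j < m)%N then a + b else b.
Definition Cf m m' (c : nat -> R) : Prop :=
  (forall j, (j < d)%N -> lo m j <= c j <= hi m' j) /\
  (forall j, (j.+1 < d)%N -> c j.+1 <= c j).
Definition Lc (c : nat -> R) : 'rV[R]_n := \sum_(j < d) c j *: v j.
Definition SS m m' := Lc @` Cf m m'.
Ltac cases j := rewrite /lo /hi; repeat (match goal with |- context[(j < ?m)%N] => case: (ltnP j m) => ? end).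

Lemma Cf_mono m m' m2 m2' : (m2 <= m)%N -> (m' <= m2')%N -> Cf m m' `<=` Cf m2 m2'.
Proof.
move=> h1 h2 c [hc hd]; split => // j jd; have := hc j jd.
cases j; move=> /andP[]; try lia;
  move=> *; apply/andP; split; lr.
Qed.

Lemma S_mono m m' m2 m2' : (m2 <= m)%N -> (m' <= m2')%N -> SS m m' `<=` SS m2 m2'.
Proof. by move=> h1 h2 x [c hc <-]; exists c => //; apply: Cf_mono hc. Qed.

Lemma dec_le (c : nat -> R) : (forall j, (j.+1 < d)%N -> c j.+1 <= c j) ->
  forall j k, (j <= k)%N -> (k < d)%N -> c k <= c j.
Proof.
move=> hd j; elim=> [|k IH] hjk hk.
  by have -> : j = 0%N by lia.
case: (ltnP j k.+1) => h.
  by apply: le_trans (hd k hk) (IH _ _); lia.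
by have -> : j = k.+1 by lia.
Qed.

Lemma Lc_inj : lin_indep v d -> forall c c', Lc c = Lc c' ->
  forall j, (j < d)%N -> c j = c' j.
Proof.
move=> li c c' E j jd; apply/eqP; rewrite -subr_eq0; apply/eqP.
apply: (li (fun j => c j - c' j)) => //.
under eq_bigr do rewrite scalerBl.
by rewrite sumrB -/(Lc c) E subrr.
Qed.

Lemma union_step i : (i < d)%N -> SS 0 i `|` SS i.+1 i.+1 = SS 0 i.+1.
Proof.
move=> id; apply/seteqP; split.
  move=> x [] ; apply: S_mono => //.
move=> x [c [hc hd] <-].
case: (lerP (c i) b) => h.
  left; exists c => //; split => // j jd; have := hc j jd.
  case: (ltnP j i) => h1; cases j;
    try lia; move=> /andP[h4 h5]; apply/andP; split => //; try lr.
  by have -> : j = i by lia.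
right; exists c => //; split => // j jd; have := hc j jd.
cases j;
  try lia; move=> /andP[h5 h6]; apply/andP; split => //; try lr.
have := @dec_le c hd j i ltac:(lia) id; lr.
Qed.

Lemma bigU i : (i <= d)%N -> \big[setU/set0]_(k < i.+1) SS k k = SS 0 i.
Proof.
elim: i => [|i IH] hi.
  by rewrite big_ord1.
by rewrite big_ord_recr /= IH ?union_step //; lia.
Qed.

Lemma inter i : lin_indep v d -> (1 <= i <= d)%N -> SS 0 i.-1 `&` SS i i = SS i i.-1.
Proof.
move=> li /andP[h1 h2]; apply/seteqP; split.
  move=> x [[c [hc hd] <-] [c' [hc' hd'] E]].
  have ee := Lc_inj li _ _ E.
  exists c' => //; split => // j jd; have := hc' j jd; have := hc j jd.
  rewrite ee //.
  cases j;
    try lia; move=> /andP[? ?] /andP[? ?]; apply/andP; split => //; try lr.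
move=> x hx; split.
  by apply: S_mono hx => //.
by apply: S_mono hx => //; lia.
Qed.

Lemma SS_ne m m' : SS m m' !=set0.
Proof.
exists (Lc (lo m)); exists (lo m) => //; split => j jd; cases j;
  try (case: (ltnP j.+1 m) => ?); try lia;
  rewrite ?lexx //=; try lr.
Qed.

Lemma SS_convex m m' : Defs.convex_set (SS m m').
Proof.
move=> x y t [c [hc hd] <-] [c' [hc' hd'] <-] /andP[t0 t1].
exists (fun j => t * c j + (1 - t) * c' j).
  split.
    move=> j jd; have := hc j jd; have := hc' j jd.
    move: (lo m j) (hi m' j) => l h /andP[? ?] /andP[? ?]; apply/andP; split; nra.
  move=> j jd; have := hd j jd; have := hd' j jd; nra.
rewrite /Lc !scaler_sumr -big_split; apply: eq_bigr => j _.
by rewrite /= !scalerA -scalerDl.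
Qed.

Definition cf (y : 'rV[R]_d.+1) (j : nat) : R := y ord0 (inord j).
Definition Fm (y : 'rV[R]_d.+1) : 'rV[R]_n := Lc (cf y).
Definition Pm m m' := [set y : 'rV[R]_d.+1 | Cf m m' (cf y) /\
   forall i : 'I_d.+1, 0 <= y ord0 i <= a + b].

Lemma Cf_ext m m' c c' : (forall j, (j < d)%N -> c j = c' j) -> Cf m m' c -> Cf m m' c'.
Proof.
move=> E [hc hd]; split => j jd; first by rewrite -E //; apply: hc.
by rewrite -!E //; [apply: hd | lia].
Qed.

Lemma Lc_ext c c' : (forall j, (j < d)%N -> c j = c' j) -> Lc c = Lc c'.
Proof. by move=> E; apply: eq_bigr => j _; rewrite E. Qed.

Lemma SS_img m m' : SS m m' = Fm @` Pm m m'.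
Proof.
apply/seteqP; split; last first.
  by move=> x [y [hy _] <-]; exists (cf y).
move=> x [c hc <-].
pose y : 'rV[R]_d.+1 := \row_(i < d.+1) (if (i < d)%N then c i else 0).
have E : forall j, (j < d)%N -> cf y j = c j.
  by move=> j jd; rewrite /cf mxE inordK ?jd //; lia.
exists y; last by apply: Lc_ext.
split; first by apply: Cf_ext hc => j jd; rewrite E.
move=> i; rewrite mxE; case: ifP => hid; last by apply/andP; split; lr.
case: hc => [hc _]; have := hc i hid; cases (nat_of_ord i); move=> /andP[? ?]; apply/andP; split; lr.
Qed.

Lemma Fsum_cont k : continuous (fun y : 'rV[R]_d.+1 => \sum_(j < k) y ord0 (inord j) *: v j).
Proof.
elim: k => [|k IH].
  have -> : (fun y : 'rV[R]_d.+1 => \sum_(j < 0) y ord0 (inord j) *: v j) = fun=> 0.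
    by apply/funext => y; rewrite big_ord0.
  exact: cst_continuous.
have -> : (fun y : 'rV[R]_d.+1 => \sum_(j < k.+1) y ord0 (inord j) *: v j) =
   (fun y : 'rV[R]_d.+1 => \sum_(j < k) y ord0 (inord j) *: v j) + (fun y : 'rV[R]_d.+1 => y ord0 (inord k) *: v k).
  by apply/funext => y; rewrite big_ord_recr.
move=> y; apply: continuousD; first exact: IH.
by apply: continuousZr_tmp; exact: coord_continuous.
Qed.

Lemma closed_lefun (f g : 'rV[R]_d.+1 -> R) : continuous f -> continuous g ->
  closed [set y | f y <= g y].
Proof.
move=> cf cg.
have -> : [set y | f y <= g y] = (fun y => g y - f y) @^-1` [set x | 0 <= x].
  by apply/seteqP; split => y /=; rewrite subr_ge0.
apply: preimage_closed; last exact: closed_ge.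
by move=> y _; have := continuousB (cg y) (cf y).
Qed.

Lemma Pm_closed m m' : closed (Pm m m').
Proof.
have -> : Pm m m' =
  \bigcap_(j in [set j | (j < d)%N]) ([set y | lo m j <= cf y j] `&` [set y | cf y j <= hi m' j])
  `&` \bigcap_(j in [set j | (j.+1 < d)%N]) [set y | cf y j.+1 <= cf y j]
  `&` \bigcap_(i in [set: 'I_d.+1]) ([set y | 0 <= y ord0 i] `&` [set y | y ord0 i <= a + b]).
  apply/seteqP; split.
    move=> y [[hc hd] hb]; split; first split.
    - by move=> j /= jd; have /andP[? ?] := hc j jd.
    - by move=> j /= jd; apply: hd.
    - by move=> i _; have /andP[? ?] := hb i.
  move=> y [[hc hd] hb]; split; first split.
  - by move=> j jd; have [/= -> ->] := hc j jd.
  - by move=> j jd; apply: hd.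
  - by move=> i; have [/= -> ->] := hb i I.
have cc : forall j, continuous (fun y : 'rV[R]_d.+1 => cf y j).
  by move=> j; exact: coord_continuous.
have cst : forall r : R, continuous (fun _ : 'rV[R]_d.+1 => r).
  by move=> r; exact: cst_continuous.
apply: closedI; first apply: closedI.
- by apply: closed_bigI => j _; apply: closedI; apply: closed_lefun.
- by apply: closed_bigI => j _; apply: closed_lefun.
- apply: closed_bigI => i _; apply: closedI; apply: closed_lefun => //;
    exact: coord_continuous.
Qed.

Lemma SS_compact m m' : compact (SS m m').
Proof.
rewrite SS_img; apply: continuous_compact.
  by apply: continuous_subspaceT; exact: Fsum_cont.
have Bc := @rV_compact R d.+1 (fun _ => `[0, a + b]%classic) (fun _ => @segment_compact R 0 (a + b)).
apply: (subclosed_compact (Pm_closed m m') Bc).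
by move=> y [_ hb] i /=; rewrite in_itv /=; exact: hb.
Qed.

Lemma SS_body m m' : convex_body (SS m m').
Proof. by split; [exact: SS_ne | split; [exact: SS_compact | exact: SS_convex]]. Qed.

Ltac nr := have := a0; have := b0; move=> ? ?; nra.

Lemma sum_if_lt (F : nat -> 'rV[R]_n) m : (m <= d)%N ->
  \sum_(j < d) (if (j < m)%N then F j else 0) = \sum_(j < m) F j.
Proof.
move=> hm; rewrite -(big_mkord xpredT (fun j => if (j < m)%N then F j else 0)).
rewrite (big_cat_nat (leq0n m) hm) /=.
rewrite [X in _ + X](eq_big_nat _ _ (F2 := fun=> 0)); last first.
  by move=> j /andP[h _]; rewrite ltnNge h.
rewrite big1_eq addr0 -(big_mkord xpredT F).
by apply: eq_big_nat => j /andP[_ h]; rewrite h.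
Qed.

Lemma sum_if_ge (G : nat -> 'rV[R]_n) m : (m <= d)%N ->
  \sum_(j < d) (if (j < m)%N then 0 else G (j - m)%N) = \sum_(j < d - m) G j.
Proof.
move=> hm; rewrite -(big_mkord xpredT (fun j => if (j < m)%N then 0 else G (j - m)%N)).
rewrite (big_cat_nat (leq0n m) hm) /=.
rewrite [X in X + _](eq_big_nat _ _ (F2 := fun=> 0)); last first.
  by move=> j /andP[_ h]; rewrite h.
rewrite big1_eq add0r -{1}(add0n m) big_addn -(big_mkord xpredT G).
apply: eq_big_nat => j _; rewrite addnK.
by have -> : (j + m < m)%N = false by apply/negbTE; rewrite -leqNgt leq_addl.
Qed.

Lemma decomp k i (c x x' : nat -> R) : (k <= i <= d)%N ->
  (forall j, (j < d)%N -> c j = if (j < k)%N then a * x j + b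
                               else if (j < i)%N then b else b * x' (j - i)%N) ->
  Lc c = b *: \sum_(j < i) v j + (a *: \sum_(j < k) x j *: v j
            + b *: \sum_(j < d - i) x' j *: v (i + j)%N).
Proof.
move=> /andP[hk hi] E.
have -> : Lc c = \sum_(j < d) ((if (j < i)%N then b *: v j else 0) +
   ((if (j < k)%N then (a * x j) *: v j else 0) +
    (if (j < i)%N then 0 else (b * x' (j - i)%N) *: v (i + (j - i))%N))).
  apply: eq_bigr => j _; rewrite E //.
  case: (ltnP j k) => h1; case: (ltnP j i) => h2; try lia.
  - by rewrite scalerDl addr0 addrC.
  - by rewrite !addr0.
  - by rewrite subnKC // !add0r.
rewrite !big_split /= (sum_if_lt (fun j => b *: v j)) //.
rewrite (sum_if_lt (fun j => (a * x j) *: v j)); last by lia.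
rewrite (sum_if_ge (fun j => (b * x' j) *: v (i + j)%N)) //.
by rewrite !scaler_sumr; congr (_ + (_ + _)); apply: eq_bigr => j _; rewrite scalerA.
Qed.

Lemma AB_eq k i : (k <= i <= d)%N ->
  set_transl (b *: \sum_(j < i) v j)
    (mink_sum (set_scale a (simplexS v k))
              (set_scale b (simplexS (fun j => v (i + j)%N) (d - i)))) = SS i k.
Proof.
move=> /andP[hk hid]; apply/seteqP; split.
  move=> z [y [u [p [xx [hx1 [hx2 ->]]] <-] [w [q [xx' [hy1 [hy2 ->]]] <-] <-]] <-].
  pose c j := if (j < k)%N then a * xx j + b
              else if (j < i)%N then b else b * xx' (j - i)%N.
  exists c; last by rewrite (@decomp k i c xx xx' ltac:(lia)) //.
  split.
  - move=> j jd; rewrite /c; cases j; try lia.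
    + by have /andP[? ?] := hx1 j ltac:(done); apply/andP; split; nr.
    + by rewrite lexx.
    + by have /andP[? ?] := hy1 (j - i)%N ltac:(lia); apply/andP; split; nr.
  - move=> j jd; rewrite /c.
    case: (ltnP j.+1 k) => h1.
      have -> : (j < k)%N by lia.
      have := hx2 j h1; have /andP[? ?] := hx1 j ltac:(lia); nr.
    case: (ltnP j k) => h2.
      have /andP[? ?] := hx1 j h2.
      case: ifP => h3; first nr.
      have /andP[? ?] := hy1 (j.+1 - i)%N ltac:(lia); nr.
    case: (ltnP j.+1 i) => h3.
      by have -> : (j < i)%N by lia.
    case: (ltnP j i) => h4.
      have /andP[? ?] := hy1 (j.+1 - i)%N ltac:(lia); nr.
    rewrite subSn //; have := hy2 (j - i)%N ltac:(lia); nr.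
move=> z [c [hc hd] <-].
pose xx j := (c j - b) / a.
pose xx' j := c (i + j)%N / b.
have Ec : forall j, (j < d)%N -> c j = if (j < k)%N then a * xx j + b
              else if (j < i)%N then b else b * xx' (j - i)%N.
  move=> j jd; rewrite /xx /xx'; case: (ltnP j k) => h1.
    by rewrite mulrC divfK ?subrK // gt_eqF.
  case: (ltnP j i) => h2.
    by have := hc j jd; rewrite /lo /hi h2 ltnNge h1 /= => /andP[? ?]; apply/le_anti/andP.
  by rewrite subnKC // mulrC divfK // gt_eqF.
exists (a *: \sum_(j < k) xx j *: v j + b *: \sum_(j < d - i) xx' j *: v (i + j)%N); last first.
  by rewrite (@decomp k i c xx xx' ltac:(lia) Ec).
exists (a *: \sum_(j < k) xx j *: v j).
  exists (\sum_(j < k) xx j *: v j) => //; exists xx; split; last split => //.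
    move=> j jk; have := hc j ltac:(lia); rewrite /lo /hi.
    have -> : (j < i)%N by lia.
    rewrite jk => /andP[? ?]; rewrite /xx; apply/andP; split.
      by apply: divr_ge0; lr.
    by rewrite ler_pdivrMr // mul1r; lr.
  move=> j jk; rewrite /xx ler_pM2r ?invr_gt0 //; have := hd j ltac:(lia); lr.
exists (b *: \sum_(j < d - i) xx' j *: v (i + j)%N) => //.
exists (\sum_(j < d - i) xx' j *: v (i + j)%N) => //; exists xx'; split; last split => //.
  move=> j jk; have := hc (i + j)%N ltac:(lia); rewrite /lo /hi.
  have -> : (i + j < i)%N = false by lia.
  have -> : (i + j < k)%N = false by lia.
  move=> /andP[? ?]; rewrite /xx'; apply/andP; split.
    by apply: divr_ge0; lr.
  by rewrite ler_pdivrMr // mul1r; lr.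
move=> j jk; rewrite /xx' ler_pM2r ?invr_gt0 // addnS; apply: hd; lia.
Qed.

Lemma sig_scale : set_scale (a + b) (simplexS v d) = SS 0 d.
Proof.
apply/seteqP; split.
  move=> z [p [xx [hx1 [hx2 ->]]] <-].
  exists (fun j => (a + b) * xx j).
    split.
      move=> j jd; rewrite /lo /hi jd /=; have /andP[? ?] := hx1 j jd.
      by apply/andP; split; nr.
    by move=> j jd; have := hx2 j jd; nr.
  by rewrite /Lc scaler_sumr; apply: eq_bigr => j _; rewrite scalerA.
move=> z [c [hc hd] <-].
have ab0 : 0 < a + b by lr.
exists (\sum_(j < d) (c j / (a + b)) *: v j).
  exists (fun j => c j / (a + b)); split; last split => //.
    move=> j jd; have := hc j jd; rewrite /lo /hi jd /= => /andP[? ?].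
    apply/andP; split; first by apply: divr_ge0; lr.
    by rewrite ler_pdivrMr // mul1r.
  by move=> j jd; rewrite ler_pM2r ?invr_gt0 //; apply: hd.
rewrite scaler_sumr; apply: eq_bigr => j _; rewrite scalerA mulrC divfK //.
by rewrite gt_eqF.
Qed.
End H.

Lemma transl_back (R : realType) n (G : zmodType) (phi : set 'rV[R]_n -> G) t K :
  transl_invariant phi -> convex_body (set_transl t K) -> phi (set_transl t K) = phi K.
Proof.
move=> ti hb.
have E : K = set_transl (- t) (set_transl t K).
  apply/seteqP; split => x.
    by move=> Kx; exists (t + x); [exists x | rewrite addKr].
  by move=> [_ [y Ky <-] <-]; rewrite addKr.
by rewrite {2}E [RHS]ti.
Qed.

Theorem lemma4p2 (R : realType) (n d : nat) (v : nat -> 'rV[R]_n)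
  (a b : R) :
  lin_indep v d -> 0 < a -> 0 < b ->
  let sigma := fun i => simplexS v i in
  let tau := fun i => simplexS (fun j => v (i + j)%N) (d - i) in
  let A := fun i => set_transl (b *: \sum_(j < i) v j)
                      (mink_sum (set_scale a (sigma i)) (set_scale b (tau i))) in
  let B := fun i => set_transl (b *: \sum_(j < i) v j)
                      (mink_sum (set_scale a (sigma i.-1)) (set_scale b (tau i))) in
  [/\ set_scale (a + b) (sigma d) = \big[setU/set0]_(i < d.+1) A i,
      (forall i, (1 <= i <= d)%N ->
         (\big[setU/set0]_(k < i) A k) `&` A i = B i)
    & forall (G : zmodType) (phi : set 'rV[R]_n -> G),
        valuation phi -> transl_invariant phi ->
        phi (set_scale (a + b) (sigma d)) =
          \sum_(i < d.+1) phi (mink_sum (set_scale a (sigma i)) (set_scale b (tau i)))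
        - \sum_(1 <= i < d.+1) phi (mink_sum (set_scale a (sigma i.-1)) (set_scale b (tau i)))].
Proof.
move=> li a0 b0 sigma tau A B.

have EA : forall i, (i <= d)%N -> A i = (SS R n d v a b) i i.
  by move=> i hi; exact: (@AB_eq R n d v a b a0 b0 i i ltac:(lia)).
have EB : forall i, (1 <= i <= d)%N -> B i = (SS R n d v a b) i i.-1.
  by move=> i hi; exact: (@AB_eq R n d v a b a0 b0 i.-1 i ltac:(lia)).
have bigA : forall i, (i <= d)%N -> \big[setU/set0]_(k < i.+1) A k = (SS R n d v a b) 0 i.
  move=> i hi; rewrite -(@bigU R n d v a b a0 b0 i hi).
  by apply: eq_bigr => k _; apply: EA; have := ltn_ord k; lia.
have Esig : set_scale (a + b) (sigma d) = (SS R n d v a b) 0 d := @sig_scale R n d v a b a0 b0.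
split.
- by rewrite Esig bigA.
- move=> i /andP[h1 h2].
  have -> : \big[setU/set0]_(k < i) A k = (SS R n d v a b) 0 i.-1.
    by have := bigA i.-1 ltac:(lia); rewrite prednK.
  rewrite EA // EB; last by rewrite h1 h2.
  by apply: (@inter R n d v a b a0 b0 i li); rewrite h1 h2.
move=> G phi hv ht.
have key : forall i, (i <= d)%N -> phi ((SS R n d v a b) 0 i) =
    \sum_(k < i.+1) phi ((SS R n d v a b) k k) - \sum_(1 <= k < i.+1) phi ((SS R n d v a b) k k.-1).
  elim => [_|i IH hi].
    by rewrite big_ord1 big_geq // subr0.
  have hU := hv ((SS R n d v a b) 0 i) ((SS R n d v a b) i.+1 i.+1) (@SS_body R n d v a b a0 b0 _ _)
      (@SS_body R n d v a b a0 b0 _ _)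
      ltac:(rewrite (@union_step R n d v a b a0 b0 i ltac:(lia)); exact: SS_body).
  rewrite (@union_step R n d v a b a0 b0 i ltac:(lia)) in hU.
  rewrite hU (@inter R n d v a b a0 b0 i.+1 li ltac:(lia)) /= IH; last by lia.
  rewrite [in RHS]big_ord_recr [in RHS]big_nat_recr //= opprD !addrA; congr (_ + _).
  by rewrite addrAC.
have PA : forall i, (i <= d)%N ->
    phi ((SS R n d v a b) i i) = phi (mink_sum (set_scale a (sigma i)) (set_scale b (tau i))).
  move=> i hi; rewrite -EA //.
  have hb : convex_body (A i) by rewrite EA //; exact: SS_body.
  by rewrite /A /B in hb *; exact: (@transl_back R n G phi _ _ ht hb).
have PB : forall i, (1 <= i <= d)%N ->
    phi ((SS R n d v a b) i i.-1) = phi (mink_sum (set_scale a (sigma i.-1)) (set_scale b (tau i))).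
  move=> i hi; rewrite -EB //.
  have hb : convex_body (B i) by rewrite EB //; exact: SS_body.
  by rewrite /A /B in hb *; exact: (@transl_back R n G phi _ _ ht hb).
rewrite Esig key //; congr (_ - _).
  by apply: eq_bigr => [[k hk]] _ /=; apply: PA; lia.
by apply: eq_big_nat => k hk; apply: PB; lia.
Qed.
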